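(* Let $t>0$ and $w(x,t)=\mathrm{e}^{-x^{2}-t/x^{2}}$ for $x\in(-\infty,\infty)$, and let $\mathrm{v}(z)=-\ln w(z,t)=z^2+t/z^2$, so $\mathrm{v}'(z)=2z-2t/z^3$. Let $P_n(x)$ be the monic polynomials of degree $n$ orthogonal with respect to $w(x,t)$ on $\mathbb{R}$, with $\int_{-\infty}^{\infty}P_m(x)P_n(x)w(x,t)\,dx=h_n\delta_{mn}$, and define $$A_{n}(z):=\frac{1}{h_{n}}\int_{-\infty}^{\infty}\frac{\mathrm{v}'(z)-\mathrm{v}'(y)}{z-y}P_{n}^{2}(y)w(y,t)dy,\qquad B_{n}(z):=\frac{1}{h_{n-1}}\int_{-\infty}^{\infty}\frac{\mathrm{v}'(z)-\mathrm{v}'(y)}{z-y}P_{n}(y)P_{n-1}(y)w(y,t)dy.$$ Then $$A_{n}(z)=2+\frac{R_{n}(t)}{z^2},\qquad B_{n}(z)=\frac{r_{n}(t)}{z}+\frac{(1-(-1)^n)t}{z^3},$$ where $$R_{n}(t):=\frac{2t}{h_{n}}\int_{-\infty}^{\infty}\frac{1}{y^2} P_{n}^{2}(y)w(y,t)dy,\qquad r_{n}(t):=\frac{2t}{h_{n-1}}\int_{-\infty}^{\infty}\frac{1}{y^3} P_{n}(y)P_{n-1}(y)w(y,t)dy.$$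
   Context: Convention: $P_{-1}=0$, so that $B_0=0$ and $r_0=0$. The weight is even, so $P_n$ contains only powers of $x$ of the same parity as $n$, and the monic orthogonal polynomials satisfy $xP_n(x)=P_{n+1}(x)+\beta_nP_{n-1}(x)$ with $\beta_n=h_n/h_{n-1}$. *)

(* Defs.v *)
From HB Require Import structures.
From mathcomp Require Import all_boot all_order all_algebra.
From mathcomp Require Import all_classical all_reals all_analysis.
Set Implicit Arguments. Unset Strict Implicit. Unset Printing Implicit Defensive.
Import Order.TTheory GRing.Theory Num.Theory.
Import numFieldNormedType.Exports.
Local Open Scope classical_set_scope.
Local Open Scope ring_scope.

Section Defs.
Variable R : realType.

Definition wt (t x : R) : R := expR (- x ^+ 2 - t / x ^+ 2).

Definition vp (t z : R) : R := 2 * z - 2 * t / z ^+ 3.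

Definition intR (f : R -> R) : R := \int[lebesgue_measure]_(x in [set: R]) f x.

Definition monic_orthogonal (t : R) (P : nat -> {poly R}) : Prop :=
  (forall n, P n \is monic /\ size (P n) = n.+1) /\
  (forall m n, m <> n -> intR (fun x => (P m).[x] * (P n).[x] * wt t x) = 0).

Definition Pprev (P : nat -> {poly R}) (n : nat) : {poly R} :=
  if n is k.+1 then P k else 0.

Definition hn (t : R) (P : nat -> {poly R}) (n : nat) : R :=
  intR (fun y => (P n).[y] ^+ 2 * wt t y).

(* h_{n-1} (only used multiplied by an integral that vanishes when n = 0) *)
Definition hprev (t : R) (P : nat -> {poly R}) (n : nat) : R :=
  intR (fun y => (Pprev P n).[y] ^+ 2 * wt t y).

Definition An (t : R) (P : nat -> {poly R}) (n : nat) (z : R) : R :=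
  (hn t P n)^-1 *
  intR (fun y => (vp t z - vp t y) / (z - y) * (P n).[y] ^+ 2 * wt t y).

Definition Bn (t : R) (P : nat -> {poly R}) (n : nat) (z : R) : R :=
  (hprev t P n)^-1 *
  intR (fun y => (vp t z - vp t y) / (z - y) * (P n).[y] * (Pprev P n).[y] * wt t y).

Definition Rn (t : R) (P : nat -> {poly R}) (n : nat) : R :=
  2 * t / hn t P n * intR (fun y => (y ^+ 2)^-1 * (P n).[y] ^+ 2 * wt t y).

Definition rn (t : R) (P : nat -> {poly R}) (n : nat) : R :=
  2 * t / hprev t P n *
  intR (fun y => (y ^+ 3)^-1 * (P n).[y] * (Pprev P n).[y] * wt t y).

End Defs.

(* Main.v *)
Require Import Defs.
From HB Require Import structures.
From mathcomp Require Import all_boot all_order all_algebra.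
From mathcomp Require Import all_classical all_reals all_analysis.
From mathcomp Require Import ring lra.
From mathcomp Require Import measurable_realfun.
From Stdlib Require Import Lia.
Import Order.TTheory GRing.Theory Num.Theory.
Import numFieldNormedType.Exports.
Local Open Scope classical_set_scope.
Local Open Scope ring_scope.

Section S.
Variable R : realType.
Notation mu := (@lebesgue_measure R).

Lemma mV : measurable_fun setT (fun x : R => x^-1).
Proof.
have -> : [set: R] = [set (0:R)] `|` [set x | x != 0].
  apply/seteqP; split => x //= _; case: (eqVneq x 0) => ?; [left|right] => //.
apply/measurable_funU => //.
- by apply: measurable_realfun.open_measurable; exact: open_neq.
split; first exact: measurable_fun_set1.
apply: measurable_realfun.open_continuous_measurable_fun; first exact: open_neq.
move=> x; rewrite inE /= => x0.
exact: inv_continuous.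
Qed.

Lemma mwt (t : R) : measurable_fun setT (wt t).
Proof.
rewrite /wt; apply: measurableT_comp; first exact: measurable_expR.
apply: measurable_funB.
  by apply: measurableT_comp; [exact: oppr_measurable| exact: measurable_funX].
apply: measurable_funM; first exact: measurable_cst.
by apply: measurableT_comp; [exact: mV| exact: measurable_funX].
Qed.

Definition F (t : R) (p : {poly R}) (k : nat) (y : R) := p.[y] * (y ^+ k)^-1 * wt t y.

Lemma mF (t : R) p k : measurable_fun setT (F t p k).
Proof.
apply: measurable_funM; last exact: mwt.
apply: measurable_funM; first exact: measurable_poly.
by apply: measurableT_comp; [exact: mV| exact: measurable_funX].
Qed.


Definition Int (f : R -> R) := mu.-integrable setT (EFin \o f).

Lemma IntD f g : Int f -> Int g -> Int (fun x => f x + g x).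
Proof.
move=> hf hg; have := integrableD measurableT hf hg.
by apply: eq_integrable => // x _ /=; rewrite EFinD.
Qed.

Lemma IntZ c f : Int f -> Int (fun x => c * f x).
Proof.
move=> hf; have := integrableZl measurableT c hf.
by apply: eq_integrable => // x _ /=; rewrite EFinM.
Qed.

Arguments IntD {f g}.
Arguments IntZ c {f}.

Lemma pow_exp (x c : R) (m : nat) : 0 <= x -> 0 < c ->
  x ^+ m <= (m%:R / c) ^+ m * expR (c * x).
Proof.
move=> x0 c0; case: m => [|m].
  rewrite !expr0 mul1r; have := expR_ge1Dx (c * x).
  have : 0 <= c * x by rewrite mulr_ge0 // ltW.
  lra.
set a := c * x / m.+1%:R.
have a0 : 0 <= a by rewrite /a divr_ge0 // mulr_ge0 // ltW.
have h1 : a <= expR a by have := expR_ge1Dx a; lra.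
have h2 : a ^+ m.+1 <= expR a ^+ m.+1 by apply: lerXn2r => //; rewrite nnegrE // expR_ge0.
have mn0 : m.+1%:R != 0 :> R by rewrite pnatr_eq0.
have cn0 : c != 0 by rewrite gt_eqF.
have ex : expR (c * x) = expR a ^+ m.+1.
  by rewrite -expRM_natl /a; congr (expR _); field.
have xa : x = m.+1%:R / c * a.
  by rewrite /a; field; rewrite nat1r mn0 cn0.
rewrite ex {1}xa exprMn ler_wpM2l //.

by rewrite exprn_ge0 // divr_ge0 // ltW.
Qed.

Lemma poly_bound (p : {poly R}) : exists M N, 0 <= M /\
  (forall y : R, `|p.[y]| <= M * (1 + y ^+ 2) ^+ N).
Proof.
elim/poly_ind: p => [|p c [M [N [M0 hM]]]].
  by exists 0, 0%N; split => // y; rewrite horner0 normr0 mul0r.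
exists (M + `|c|), N.+1; split; first by rewrite addr_ge0.
move=> y; rewrite hornerMXaddC.
have e1 : 1 <= 1 + y ^+ 2 by rewrite lerDl sqr_ge0.
have e2 : 1 <= (1 + y ^+ 2) ^+ N by rewrite exprn_ege1.
have e3 : `|y| <= 1 + y ^+ 2.
  rewrite -[y ^+ 2]real_normK ?num_real //; have := sqr_ge0 (`|y| - 1/2); nra.
have e4 := hM y.
have n0 : 0 <= `|p.[y]| by [].
rewrite exprS.
apply: (le_trans (ler_normD _ _)); rewrite normrM.
have : `|p.[y]| * `|y| <= M * (1 + y ^+ 2) ^+ N * (1 + y ^+ 2).
  by apply: ler_pM.
have : 0 <= M * (1 + y ^+ 2) ^+ N by rewrite mulr_ge0 // exprn_ge0 // (le_trans ler01).
have : `|c| <= `|c| * ((1 + y ^+ 2) * (1 + y ^+ 2) ^+ N).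
  have e5 : 1 <= (1 + y ^+ 2) * (1 + y ^+ 2) ^+ N by rewrite mulr_ege1.
  have := normr_ge0 c; nra.
nra.
Qed.


Lemma Int_G2 : Int (fun y => expR (- y ^+ 2 / 2)).
Proof.
have hn : Int (normal_pdf 0 1) by exact: integrable_normal_pdf.
have := IntZ (normal_peak (1:R))^-1 hn.
apply: eq_integrable => // y _ /=.
rewrite /normal_pdf oner_eq0 /= mulrA mulVf ?mul1r; last first.
  by rewrite gt_eqF // normal_peak_gt0 // oner_eq0.
by rewrite /normal_fun subr0 expr1n.
Qed.

Lemma Int_gauss : Int (fun y => expR (- y ^+ 2)).
Proof. exact: integrableT_gauss. Qed.

Lemma IntF (t : R) p k : 0 < t -> Int (F t p k).
Proof.
move=> t0.
have [M [N [M0 hM]]] := poly_bound p.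
pose A1 : R := (N%:R / (1/2)) ^+ N.
pose A2 := (k%:R / t) ^+ k.
pose C : R := M * A1 * A2 * expR (1/2 + t).
have A10 : 0 <= A1 by rewrite exprn_ge0 // divr_ge0.
have A20 : 0 <= A2 by rewrite exprn_ge0 // divr_ge0 // ltW.
have C0 : 0 <= C by rewrite mulr_ge0 ?expR_ge0 // !mulr_ge0.
pose g := fun y => C * expR (- y ^+ 2 / 2) + `|p.[0]| * expR (- y ^+ 2).
have hg : Int g by apply: IntD; apply: IntZ; [exact: Int_G2|exact: Int_gauss].
apply: le_integrable hg => //.
  by apply/measurable_EFinP; exact: mF.
move=> y _; change (`|(F t p k y)%:E| <= `|(g y)%:E|)%E; rewrite !abse_EFin lee_fin [`|g y|]ger0_norm; last first.
  by rewrite /g addr_ge0 // mulr_ge0 // expR_ge0.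
have g1 : 0 <= C * expR (- y ^+ 2 / 2) by rewrite mulr_ge0 // expR_ge0.
have g2 : 0 <= `|p.[0]| * expR (- y ^+ 2) by rewrite mulr_ge0 // expR_ge0.
have [->|y0] := eqVneq y 0.
  have w0 : wt t 0 = 1 by rewrite /wt !expr0n /= invr0 mulr0 ?oppr0 ?subr0 ?addr0 expR0.
  have e0 : g 0 = C + `|p.[0]|.
    by rewrite /g !expr0n /= oppr0 mul0r expR0 !mulr1.
  have hk : `|(0 ^+ k)^-1| <= 1 :> R.
    by case: (k) => [|k']; rewrite ?expr0 ?invr1 ?normr1 // expr0n /= invr0 normr0 ler01.
  rewrite e0 /F w0 mulr1 normrM.
  apply: (le_trans (ler_wpM2l (normr_ge0 _) hk)); rewrite mulr1 lerDr //.
have gg : C * expR (- y ^+ 2 / 2) <= g y by rewrite /g lerDl.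
apply: le_trans gg.
rewrite /F normrM normrM [`|wt t y|]ger0_norm ?expR_ge0 //.
have b1 : `|p.[y]| <= M * (A1 * expR (1/2 * (1 + y ^+ 2))).
  apply: (le_trans (hM y)); apply: ler_wpM2l => //.
  by apply: pow_exp => //; rewrite addr_ge0 // sqr_ge0.
have b2 : `|(y ^+ k)^-1| <= A2 * expR (t * (1 + (y ^+ 2)^-1)).
  have h1 : `|(y ^+ k)^-1| = `|y|^-1 ^+ k by rewrite normfV normrX exprVn.
  have h2 : `|y|^-1 <= 1 + (y ^+ 2)^-1.
    have -> : (y ^+ 2)^-1 = `|y|^-1 ^+ 2 by rewrite exprVn real_normK ?num_real.
    have := sqr_ge0 (`|y|^-1 - 1/2); nra.
  rewrite h1; apply: (le_trans (lerXn2r k _ _ h2)).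
  - by rewrite nnegrE invr_ge0.
  - by rewrite nnegrE addr_ge0 // invr_ge0 sqr_ge0.
  apply: pow_exp => //; by rewrite addr_ge0 // invr_ge0 sqr_ge0.
have b3 : `|p.[y]| * `|(y ^+ k)^-1| * wt t y <=
    M * (A1 * expR (1/2 * (1 + y ^+ 2))) * (A2 * expR (t * (1 + (y ^+ 2)^-1))) * wt t y.
  by apply: ler_wpM2r; [exact: expR_ge0| apply: ler_pM].
apply: (le_trans b3); rewrite le_eqVlt; apply/orP; left; apply/eqP.
rewrite /C /wt.
have -> : M * (A1 * expR (1 / 2 * (1 + y ^+ 2))) * (A2 * expR (t * (1 + (y ^+ 2)^-1))) *
  expR (- y ^+ 2 - t / y ^+ 2) = M * A1 * A2 * (expR (1 / 2 * (1 + y ^+ 2)) *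
  expR (t * (1 + (y ^+ 2)^-1)) * expR (- y ^+ 2 - t / y ^+ 2)) by ring.
have y20 : y ^+ 2 != 0 by rewrite sqrf_eq0.
have HE : expR (1 / 2 * (1 + y ^+ 2)) * expR (t * (1 + (y ^+ 2)^-1)) *
    expR (- y ^+ 2 - t / y ^+ 2) = expR (1/2 + t) * expR (- y ^+ 2 / 2).
  by rewrite -!expRD; congr (expR _); field.
rewrite HE; ring.
Qed.


Lemma refl_int (f : R -> R) : Int f -> Int (fun y => f (- y)) ->
  intR f = intR (fun y => f (- y)).
Proof.
move=> hf hfN; rewrite /intR /Rintegral; congr fine.
rewrite (eq_measure_integral (pushforward mu (-%R : R -> measurableTypeR R))); last first.
  by move=> A mA _; apply/esym; apply: lebesgue_measureN.
rewrite integral_pushforward //.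
by case/integrableP: hf.
Qed.


Lemma ae_int (f g : R -> R) (a : R) : measurable_fun setT f -> Int g ->
  (forall y, y != 0 -> y != a -> f y = g y) -> intR f = intR g.
Proof.
move=> mf hg fg; rewrite /intR /Rintegral; congr fine.
apply: ae_eq_integral => //.
- by apply/measurable_EFinP.
- by case/integrableP: hg.
exists ([set 0] `|` [set a]); split.
- by apply: measurableU.
- apply: countable_lebesgue_measure0.
  by apply: finite_set_countable; rewrite finite_setU; split; exact: finite_set1.
move=> y /= hy; apply: contrapT => hy'; apply: hy => _.
rewrite fg //; apply/eqP => hh; apply: hy'; [left|right]; exact: hh.
Qed.


Lemma intR0 : intR (fun _ : R => 0) = 0.
Proof. by rewrite /intR /Rintegral integral0_eq. Qed.


Lemma roots_fin (p : {poly R}) : p != 0 ->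
  exists S : set R, finite_set S /\ (forall x, p.[x] = 0 -> S x).
Proof.
have [n hn] : exists n, (size p <= n)%N by exists (size p).
elim: n p hn => [|n IH] q hq q0.
  by move: hq; rewrite leqn0 size_poly_eq0 (negbTE q0).
case: (pselect (exists a, q.[a] = 0)) => [[a qa]|nr]; last first.
  exists set0; split; first exact: finite_set0.
  by move=> x qx; apply: nr; exists x.
have /factor_theorem [q' eq] : root q a by apply/rootP.
have q'0 : q' != 0 by apply: contra q0 => /eqP q'0; rewrite eq q'0 mul0r.
have sq : size q = (size q').+1.
  by rewrite eq size_Mmonic ?monicXsubC // size_XsubC addn2.
have hq' : (size q' <= n)%N by rewrite -ltnS -sq.
have [S [fS hS]] := IH q' hq' q'0.
exists ([set a] `|` S); split; first by rewrite finite_setU; split => //; exact: finite_set1.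
move=> x; rewrite eq hornerM hornerXsubC => /eqP; rewrite mulf_eq0 => /orP[/eqP h|].
  by right; apply: hS.
by rewrite subr_eq0 => /eqP ->; left.
Qed.


Lemma lin4 (f1 f2 f3 f4 : R -> R) a b c d : Int f1 -> Int f2 -> Int f3 -> Int f4 ->
  intR (fun y => a * f1 y + b * f2 y + c * f3 y + d * f4 y) =
  a * intR f1 + b * intR f2 + c * intR f3 + d * intR f4.
Proof.
move=> h1 h2 h3 h4.
have i1 := IntZ a h1; have i2 := IntZ b h2; have i3 := IntZ c h3; have i4 := IntZ d h4.
have i12 := IntD i1 i2; have i123 := IntD i12 i3.
rewrite /intR (RintegralD _ i123 i4) // (RintegralD _ i12 i3) // (RintegralD _ i1 i2) //.
by rewrite !RintegralZl.
Qed.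

Lemma mvp (t : R) : measurable_fun setT (vp t).
Proof.
rewrite /vp; apply: measurable_funB.
  by apply: measurable_funM => //; exact: measurable_cst.
apply: measurable_funM; first exact: measurable_cst.
by apply: measurableT_comp; [exact: mV| exact: measurable_funX].
Qed.

Section Orth.
Variable t : R.
Hypothesis ht : 0 < t.

Lemma IF0 k : intR (F t 0 k) = 0.
Proof.
rewrite -intR0; congr intR; apply/funext => y; by rewrite /F horner0 !mul0r.
Qed.

Lemma IFD p q k : intR (F t (p + q) k) = intR (F t p k) + intR (F t q k).
Proof.
have -> : F t (p + q) k = fun y => F t p k y + F t q k y.
  by apply/funext => y; rewrite /F hornerD; ring.
by rewrite /intR RintegralD //; apply: IntF.
Qed.

Lemma IFZ c p k : intR (F t (c *: p) k) = c * intR (F t p k).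
Proof.
have -> : F t (c *: p) k = fun y => c * F t p k y.
  by apply/funext => y; rewrite /F hornerZ; ring.
by rewrite /intR RintegralZl //; apply: IntF.
Qed.

Lemma IFB p q k : intR (F t (p - q) k) = intR (F t p k) - intR (F t q k).
Proof. by rewrite -scaleN1r IFD IFZ mulN1r. Qed.

Lemma FN p k y : F t p k (- y) = (-1) ^+ k * F t (p \Po (- 'X)) k y.
Proof.
rewrite /F horner_comp hornerN hornerX [(- y) ^+ k]exprNn invfM.
have -> : ((-1) ^+ k)^-1 = (-1) ^+ k :> R by rewrite -exprVn invrN1.
have -> : wt t (- y) = wt t y by rewrite /wt sqrrN.
ring.
Qed.

Lemma IF_refl p k : intR (F t p k) = (-1) ^+ k * intR (F t (p \Po (- 'X)) k).
Proof.
have hN : Int (fun y => F t p k (- y)).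
  have := IntZ ((-1) ^+ k) (IntF t (p \Po (- 'X)) k ht).
  by apply: eq_integrable => // y _ /=; rewrite FN.
rewrite (refl_int _ (IntF t p k ht) hN).
have -> : (fun y => F t p k (- y)) = fun y => (-1) ^+ k * F t (p \Po (- 'X)) k y.
  by apply/funext => y; rewrite FN.
by rewrite /intR RintegralZl //; apply: IntF.
Qed.

Variable P : nat -> {poly R}.
Hypothesis hP : monic_orthogonal t P.

Lemma orthF j n : j <> n -> intR (F t (P j * P n) 0) = 0.
Proof.
move=> jn; rewrite -(hP.2 j n jn); congr intR; apply/funext => y.
by rewrite /F hornerM expr0 invr1 mulr1.
Qed.

Lemma sizeP n : size (P n) = n.+1.
Proof. by case: (hP.1 n). Qed.

Lemma lcP n : lead_coef (P n) = 1.
Proof. by case: (hP.1 n) => /monicP. Qed.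

Lemma orth_exp (r : {poly R}) n :
  (forall j, (j < n)%N -> intR (F t (P j * r) 0) = 0) ->
  forall q : {poly R}, (size q <= n)%N -> intR (F t (q * r) 0) = 0.
Proof.
move=> hr q0 hq0.
suff : forall s (q : {poly R}), (size q <= s)%N -> (s <= n)%N -> intR (F t (q * r) 0) = 0.
  by move/(_ n q0 hq0 (leqnn n)).
elim => [|s IH] {}q hq hs.
  move: hq; rewrite leqn0 size_poly_eq0 => /eqP ->.
  by rewrite mul0r IF0.
pose c := q`_s.
pose q' := q - c *: P s.
have hq' : (size q' <= s)%N.
  have lcs : (P s)`_s = 1 by rewrite -(lcP s) lead_coefE sizeP.
  apply/leq_sizeP => j hj; rewrite /q' coefB coefZ.
  case: (ltngtP j s) => js.
  - by move: hj; rewrite leqNgt js.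
  - by rewrite !nth_default ?mulr0 ?subr0 ?sizeP //; apply: leq_trans hq js.
  - by rewrite js lcs mulr1 /c subrr.
have -> : q = q' + c *: P s by rewrite /q' subrK.
rewrite mulrDl -scalerAl IFD IFZ IH //; last exact: ltnW.
by rewrite hr // mulr0 addr0.
Qed.


Lemma Pos (p : {poly R}) : p != 0 -> 0 < intR (F t (p * p) 0).
Proof.
move=> p0.
pose f := F t (p * p) 0.
have f0 : forall y, 0 <= f y.
  move=> y; rewrite /f /F hornerM expr0 invr1 mulr1 mulr_ge0 ?expR_ge0 //.
  by have := sqr_ge0 p.[y]; rewrite expr2.
have hf := IntF t (p * p) 0 ht.
have I0 : 0 <= intR f by apply: Rintegral_ge0 => y _; exact: f0.
rewrite lt_def I0 andbT; apply/eqP => I0'.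
have E0 : (\int[mu]_(x in setT) (f x)%:E = 0)%E.
  rewrite -[LHS]fineK; first by rewrite -/(Rintegral _ _ _) -/(intR f) I0'.
  exact: integrable_fin_num.
have mf : measurable_fun setT (EFin \o f) by case/integrableP: hf.
have : (\int[mu]_(x in setT) `|(f x)%:E| = 0)%E.
  rewrite -E0; apply: eq_integral => y _; rewrite abse_EFin ger0_norm //.
move/(ae_eq_integral_abs mu measurableT mf) => [N [mN N0 hN]].
have [S [fS hS]] := roots_fin p p0.
have sub : `[(0:R), 1] `<=` N `|` S.
  move=> y _; case: (pselect (N y)) => [|nN]; [by left|right].
  apply: hS; apply: contrapT => py; apply: nN; apply: hN => /=.
  move=> /(_ I) /= /eqP; rewrite eqe /f /F hornerM expr0 invr1 mulr1.
  rewrite !mulf_eq0 orbb => /orP[/eqP //|]; by rewrite gt_eqF // expR_gt0.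
have mS : measurable S by apply: countable_measurable; [by [] | exact: finite_set_countable].
have h2 : (mu `[0%R : R, 1%R] <= mu (N `|` S))%E.
  by apply: le_measure => //; rewrite inE //; apply: measurableU.
have m01 : (mu `[0%R : R, 1%R] = 1)%E.
  by rewrite lebesgue_measure_itv /= lte_fin ltr01 oppr0 adde0.
have h1 : (mu (N `|` S) <= mu N + mu S)%E by apply: measureU2.
have mS0 : (mu S = 0)%E by exact: (countable_lebesgue_measure0 (finite_set_countable fS)).
rewrite N0 mS0 adde0 in h1.
have := le_trans h2 h1; rewrite m01.
by rewrite lee_fin ler10.
Qed.


Lemma monic_diff (p q : {poly R}) k : size p = k.+1 -> size q = k.+1 ->
  lead_coef p = 1 -> lead_coef q = 1 -> (size (p - q)%R <= k)%N.
Proof.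
move=> sp sq lp lq; apply/leq_sizeP => j hj; rewrite coefB.
case: (ltngtP j k) => jk.
- by move: hj; rewrite leqNgt jk.
- by rewrite !nth_default ?subr0 // ?sp ?sq.
- by move: lp lq; rewrite !lead_coefE sp sq /= jk => -> ->; rewrite subrr.
Qed.

Lemma negXX : (- 'X : {poly R}) \Po (- 'X) = 'X.
Proof. by rewrite -scaleN1r comp_polyZ comp_polyX !scaleN1r opprK. Qed.

Lemma sizeNX : size (- 'X : {poly R}) = 2.
Proof. by rewrite size_polyN size_polyX. Qed.

Lemma sign2 n : (-1) ^+ n * (-1) ^+ n = 1 :> R.
Proof. by rewrite -exprMn mulrNN mulr1 expr1n. Qed.

Lemma orthP n j : (j < n)%N -> intR (F t (P j * P n) 0) = 0.
Proof. by move=> hj; apply: orthF => e; rewrite e ltnn in hj. Qed.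

Lemma par n : P n \Po (- 'X) = (-1) ^+ n *: P n.
Proof.
have sC : size (P n \Po - 'X) = n.+1 by rewrite size_comp_poly2 ?sizeNX // sizeP.
have lC : lead_coef (P n \Po - 'X) = (-1) ^+ n.
  by rewrite lead_coef_comp ?sizeNX // lcP lead_coefN lead_coefX sizeP /= mul1r.
have s0 : (-1) ^+ n != 0 :> R by rewrite signr_eq0.
pose Q := (-1) ^+ n *: (P n \Po - 'X) - P n.
have sQ : (size Q <= n)%N.
  apply: monic_diff; rewrite ?sizeP ?lcP //.
  - by rewrite size_scale.
  - by rewrite lead_coefZ lC sign2.
have orthQ : forall j, (j < n)%N -> intR (F t (P j * Q) 0) = 0.
  move=> j hj; rewrite /Q mulrBr IFB -scalerAr IFZ orthP // subr0.
  rewrite IF_refl expr0 mul1r comp_polyM -comp_polyA negXX comp_polyXr.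
  rewrite (orth_exp (P n) n (fun i hi => orthP n i hi)) ?mulr0 //.
  by rewrite size_comp_poly2 ?sizeNX // sizeP.
have QQ : intR (F t (Q * Q) 0) = 0 by apply: (orth_exp Q n orthQ Q sQ).
have Q0 : Q = 0.
  by apply/eqP; apply: contraT => /Pos; rewrite QQ ltxx.
move/eqP: Q0; rewrite subr_eq0 => /eqP e.
by rewrite -{2}e scalerA sign2 scale1r.
Qed.


Lemma kernel (s : {poly R}) z : z != 0 ->
  intR (fun y => (vp t z - vp t y) / (z - y) * s.[y] * wt t y) =
  2 * intR (F t s 0) + 2 * t / z * intR (F t s 3) +
  2 * t / z ^+ 2 * intR (F t s 2) + 2 * t / z ^+ 3 * intR (F t s 1).
Proof.
move=> z0.
rewrite -lin4; try exact: IntF.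
apply: (ae_int _ _ z).
- apply: measurable_funM; last exact: mwt.
  apply: measurable_funM; last exact: measurable_poly.
  apply: measurable_funM.
    by apply: measurable_funB; [exact: measurable_cst| exact: mvp].
  apply: measurableT_comp; first exact: mV.
  by apply: measurable_funB; [exact: measurable_cst| exact: measurable_id].
- exact: (IntD (IntD (IntD (IntZ 2 (IntF t s 0 ht)) (IntZ (2 * t / z) (IntF t s 3 ht)))
    (IntZ (2 * t / z ^+ 2) (IntF t s 2 ht))) (IntZ (2 * t / z ^+ 3) (IntF t s 1 ht))).
move=> y y0 yz.
have zy : z - y != 0 by rewrite subr_eq0 eq_sym.
rewrite /F /vp; field.
by rewrite zy z0 y0.
Qed.

Lemma vanish_odd s k : s \Po (- 'X) = s -> odd k -> intR (F t s k) = 0.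
Proof.
move=> hs ok; have := IF_refl s k; rewrite hs -signr_odd ok expr1 mulN1r => h.
lra.
Qed.

Lemma vanish_even s k : s \Po (- 'X) = - s -> ~~ odd k -> intR (F t s k) = 0.
Proof.
move=> hs ok; have := IF_refl s k; rewrite hs -[- s]scaleN1r IFZ -signr_odd (negbTE ok) expr0 mul1r => h.
lra.
Qed.

Lemma P0 n : P n != 0.
Proof. by rewrite -size_poly_eq0 sizeP. Qed.

Lemma mainA n z : z != 0 -> An t P n z = 2 + Rn t P n / z ^+ 2.
Proof.
move=> z0.
pose s := P n * P n.
have hs : s \Po (- 'X) = s.
  by rewrite /s comp_polyM par -scalerAl -scalerAr scalerA sign2 scale1r.
have hn_eq : hn t P n = intR (F t s 0).
  by rewrite /hn; congr intR; apply/funext => y; rewrite /F hornerM expr0 invr1 mulr1 expr2.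
have hpos : 0 < hn t P n by rewrite hn_eq; apply: Pos; exact: P0.
have hn0 : hn t P n != 0 by rewrite gt_eqF.
rewrite /An.
have -> : intR (fun y => (vp t z - vp t y) / (z - y) * (P n).[y] ^+ 2 * wt t y) =
  intR (fun y => (vp t z - vp t y) / (z - y) * s.[y] * wt t y).
  by congr intR; apply/funext => y; rewrite /s hornerM expr2.
rewrite kernel // (vanish_odd s 3) // (vanish_odd s 1) //.
rewrite /Rn -hn_eq.
have -> : intR (fun y => (y ^+ 2)^-1 * (P n).[y] ^+ 2 * wt t y) = intR (F t s 2).
  by congr intR; apply/funext => y; rewrite /F /s hornerM expr2; ring.
rewrite hn_eq in hn0 *.
field.
by rewrite hn0 z0.
Qed.


Lemma P_odd0 n : odd n -> (P n).[0] = 0.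
Proof.
move=> on; have := congr1 (fun p => p.[0]) (par n).
rewrite /= horner_comp hornerN hornerX oppr0 hornerZ -signr_odd on expr1 mulN1r => h.
lra.
Qed.

Lemma factorX n : odd n -> exists U, P n = U * 'X /\ size U = n /\ lead_coef U = 1.
Proof.
move=> on.
have /factor_theorem [U eU] : root (P n) 0 by apply/rootP; exact: P_odd0.
rewrite polyC0 subr0 in eU.
have U0 : U != 0 by apply: contra (P0 n) => /eqP U0; rewrite eU U0 mul0r.
exists U; split => //; split.
  by have := sizeP n; rewrite eU size_mulX // => -[].
by rewrite -(lcP n) eU lead_coefMX.
Qed.

Lemma I1 m : intR (F t (P m.+1 * P m) 1) =
  (1 - (-1) ^+ m.+1) / 2 * intR (F t (P m * P m) 0).
Proof.
case: (boolP (odd m)) => om.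
  have [V [eV [sV lV]]] := factorX m om.
  have -> : (-1) ^+ m.+1 = 1 :> R by rewrite -signr_odd /= om.
  rewrite subrr mul0r mul0r.
  rewrite (ae_int _ (F t (V * P m.+1) 0) 0).
  - apply: (orth_exp (P m.+1) m.+1 (fun i hi => orthP m.+1 i hi)).
    by rewrite sV.
  - exact: mF.
  - exact: IntF.
  move=> y y0 _; rewrite /F eV !hornerM hornerX expr1 expr0 invr1.
  by field.
have [U [eU [sU lU]]] : exists U, P m.+1 = U * 'X /\ size U = m.+1 /\ lead_coef U = 1.
  by apply: factorX; rewrite /= om.
have -> : (-1) ^+ m.+1 = -1 :> R by rewrite -signr_odd /= (negbTE om) expr1.
rewrite (ae_int _ (F t (U * P m) 0) 0).
- rewrite (_ : U = P m + (U - P m)); last by rewrite addrC subrK.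
  rewrite mulrDl IFD (orth_exp (P m) m (fun i hi => orthP m i hi) (U - P m)).
  + have -> : (1 - -1) / 2 = 1 :> R by field.
    by rewrite mul1r addr0.
  + by apply: monic_diff; rewrite ?sizeP ?lcP.
- exact: mF.
- exact: IntF.
move=> y y0 _; rewrite /F eU !hornerM hornerX expr1 expr0 invr1.
by field.
Qed.

Lemma mainB n z : z != 0 ->
  Bn t P n z = rn t P n / z + (1 - (-1) ^+ n) * t / z ^+ 3.
Proof.
move=> z0; case: n => [|m].
  rewrite /Bn /rn /Pprev expr0 subrr !mul0r.
  have -> : (fun y => (vp t z - vp t y) / (z - y) * (P 0).[y] * (0 : {poly R}).[y] * wt t y)
    = fun _ => 0.
    by apply/funext => y; rewrite horner0 mulr0 mul0r.
  have -> : (fun y => (y ^+ 3)^-1 * (P 0).[y] * (0 : {poly R}).[y] * wt t y) = fun _ => 0.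
    by apply/funext => y; rewrite horner0 mulr0 mul0r.
  by rewrite intR0 !mulr0 mul0r addr0.
pose s := P m.+1 * P m.
have hs : s \Po (- 'X) = - s.
  rewrite /s comp_polyM !par -scalerAl -scalerAr scalerA exprS.
  by rewrite -mulrA sign2 mulr1 scaleN1r.
have hm_eq : hprev t P m.+1 = intR (F t (P m * P m) 0).
  by rewrite /hprev /Pprev; congr intR; apply/funext => y; rewrite /F hornerM expr0 invr1 mulr1 expr2.
have hpos : 0 < hprev t P m.+1 by rewrite hm_eq; apply: Pos; exact: P0.
have hm0 : hprev t P m.+1 != 0 by rewrite gt_eqF.
rewrite /Bn /rn /Pprev.
have -> : intR (fun y => (vp t z - vp t y) / (z - y) * (P m.+1).[y] * (P m).[y] * wt t y) =
  intR (fun y => (vp t z - vp t y) / (z - y) * s.[y] * wt t y).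
  by congr intR; apply/funext => y; rewrite /s hornerM mulrA.
rewrite kernel // (vanish_even s 2) // I1.
rewrite (_ : intR (F t s 0) = 0); last by apply: orthF => e; lia.
have -> : intR (fun y => (y ^+ 3)^-1 * (P m.+1).[y] * (P m).[y] * wt t y) = intR (F t s 3).
  by congr intR; apply/funext => y; rewrite /F /s hornerM; ring.
rewrite -hm_eq.
field.
by rewrite hm0 z0.
Qed.

End Orth.

End S.

Theorem mainTheorem1 (R : realType) (t : R) (P : nat -> {poly R}) :
  0 < t -> monic_orthogonal t P ->
  forall (n : nat) (z : R), z != 0 ->
    An t P n z = 2 + Rn t P n / z ^+ 2 /\
    Bn t P n z = rn t P n / z + (1 - (-1) ^+ n) * t / z ^+ 3.
Proof.
move=> ht hP n z z0; split.
- exact: (@mainA R t ht P hP n z z0).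
- exact: (@mainB R t ht P hP n z z0).
Qed.
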